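(* Let $q\in\mathbb C\setminus\{0\}$ not be a root of unity, $A=\mathbb C_q[SL(2)]$ with the canonical braiding $\Psi$ and the ribbon automorphism $\sigma=\sigma_+$. Then $HH^{\Psi,\sigma}_0(A)=0$; equivalently, the map $b_1:A\otimes A\to A$, $b_1=\mu-\mu(\sigma\otimes\mathrm{id})\Psi$, is surjective.
   Context: Fix $q^{1/2}$. $\mathbb C_q[SL(2)]$: generators $a,b,c,d$, relations $ab=qba$, $ac=qca$, $bd=qdb$, $cd=qdc$, $bc=cb$, $ad-qbc=1$, $da-q^{-1}bc=1$, matrix coproduct $\Delta\begin{pmatrix}a&b\\c&d\end{pmatrix}=\begin{pmatrix}a&b\\c&d\end{pmatrix}\otimes\begin{pmatrix}a&b\\c&d\end{pmatrix}$. Universal r-form $\mathbf r$ determined multiplicatively by $\mathbf r(a,a)=\mathbf r(d,d)=q^{1/2}$, $\mathbf r(a,d)=\mathbf r(d,a)=q^{-1/2}$, $\mathbf r(c,b)=q^{-1/2}(q-q^{-1})$, other generator values $0$. Canonical braiding: $\Psi(f\otimes g)=g_{(1)}\otimes f_{(1)}\mathbf r(f_{(2)},g_{(2)})$. $\sigma_+$ is the ribbon automorphism (invertible right comodule map with $\sigma(1)=1$, $\sigma\mu=\mu(\sigma\otimes\sigma)\Psi^2$) with $\sigma_+(g)=q^{3/2}g$ for $g\in\{a,b,c,d\}$. $HH^{\Psi,\sigma}_0(A)$ is the cokernel of $b_1$ (the degree-zero braided Hochschild homology; $A$ is unital so the cyclic and non-cyclic versions agree in degree 0). *)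

(* Defs.v *)
(* Quantum coordinate algebra C_q[SL(2)] encoded through the
   free algebra on the generators a,b,c,d (words with coefficients), modulo the
   two-sided ideal generated by the defining relations. *)
From mathcomp Require Import all_boot all_algebra.
From mathcomp Require Import complex reals.
Set Implicit Arguments.
Unset Strict Implicit.
Unset Printing Implicit Defensive.
Import GRing.Theory.
Local Open Scope ring_scope.

(* generator u_{ij} of the matrix (a b ; c d) is the pair (i,j) *)
Definition gen := ('I_2 * 'I_2)%type.
Definition word := seq gen.

Definition i0 : 'I_2 := ord0.
Definition i1 : 'I_2 := @ord_max 1.
Definition ga : gen := (i0, i0).
Definition gb : gen := (i0, i1).
Definition gc : gen := (i1, i0).
Definition gd : gen := (i1, i1).

(* matrix coproduct on words: Delta(u_ij) = sum_k u_ik (x) u_kj, multiplicative *)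
Fixpoint deltaW (w : word) : seq (word * word) :=
  match w with
  | [::] => [:: ([::], [::])]
  | g :: w' => [seq ((g.1, k) :: p.1, (k, g.2) :: p.2) | k <- enum 'I_2, p <- deltaW w']
  end.

(* iterated coproduct (Delta (x) id) Delta on words *)
Fixpoint delta3W (w : word) : seq (word * word * word) :=
  match w with
  | [::] => [:: ([::], [::], [::])]
  | g :: w' => [seq ((g.1, kl.1) :: t.1.1, kl :: t.1.2, (kl.2, g.2) :: t.2)
               | kl <- enum {: 'I_2 * 'I_2}, t <- delta3W w']
  end.

Section NC.
Variable K : fieldType.

Definition ncpoly := seq (K * word).
Definition ncmonom (c : K) (w : word) : ncpoly := [:: (c, w)].
Definition ncadd (p r : ncpoly) : ncpoly := p ++ r.
Definition ncscale (c : K) (p : ncpoly) : ncpoly := [seq (c * x.1, x.2) | x <- p].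
Definition ncopp (p : ncpoly) : ncpoly := ncscale (-1) p.
Definition ncmul (p r : ncpoly) : ncpoly := [seq (x.1 * y.1, x.2 ++ y.2) | x <- p, y <- r].
Definition nccoef (p : ncpoly) (w : word) : K := \sum_(x <- p | x.2 == w) x.1.

Variable sq : K. (* sq = q^{1/2}, q = sq^2 *)
Definition qq : K := sq ^+ 2.

Definition rels : seq ncpoly :=
  [:: ncadd (ncmonom 1 [:: ga; gb]) (ncmonom (- qq) [:: gb; ga]);
      ncadd (ncmonom 1 [:: ga; gc]) (ncmonom (- qq) [:: gc; ga]);
      ncadd (ncmonom 1 [:: gb; gd]) (ncmonom (- qq) [:: gd; gb]);
      ncadd (ncmonom 1 [:: gc; gd]) (ncmonom (- qq) [:: gd; gc]);
      ncadd (ncmonom 1 [:: gb; gc]) (ncmonom (- 1) [:: gc; gb]);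
      ncadd (ncmonom 1 [:: ga; gd])
            (ncadd (ncmonom (- qq) [:: gb; gc]) (ncmonom (- 1) [::]));
      ncadd (ncmonom 1 [:: gd; ga])
            (ncadd (ncmonom (- qq^-1) [:: gb; gc]) (ncmonom (- 1) [::]))].
Definition rel (i : 'I_7) : ncpoly := nth [::] rels i.

Definition inI (p : ncpoly) : Prop :=
  exists s : seq (K * word * 'I_7 * word),
    forall w, nccoef p w =
      nccoef (flatten [seq ncmul (ncmul (ncmonom t.1.1.1 t.1.1.2) (rel t.1.2))
                                 (ncmonom 1 t.2) | t <- s]) w.

Definition eqA (p r : ncpoly) : Prop := inI (ncadd p (ncopp r)).

Definition epsW (v : word) : K := \prod_(y <- v) (y.1 == y.2)%:R.

Definition r0 (x y : gen) : K :=
  if (x == ga) && (y == ga) then sq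
  else if (x == gd) && (y == gd) then sq
  else if (x == ga) && (y == gd) then sq^-1
  else if (x == gd) && (y == ga) then sq^-1
  else if (x == gc) && (y == gb) then sq^-1 * (qq - qq^-1)
  else 0.

(* multiplicative extension: r(x, y z) = r(x_(1), z) r(x_(2), y) for a generator x *)
Fixpoint r1 (x : gen) (v : word) {struct v} : K :=
  match v with
  | [::] => (x.1 == x.2)%:R
  | y :: z => \sum_(k < 2) r1 (x.1, k) z * r0 (k, x.2) y
  end.

(* r(x u, v) = r(x, v_(1)) r(u, v_(2)),  r(1, v) = eps(v) *)
Fixpoint rW (u v : word) {struct u} : K :=
  match u with
  | [::] => epsW v
  | x :: u' => \sum_(p <- deltaW v) r1 x p.1 * rW u' p.2
  end.

(* ribbon automorphism sigma_+ : sigma(1) = 1, sigma(g) = q^{3/2} g on generators,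
   and sigma(f g) = mu (sigma (x) sigma) Psi^2 (f (x) g)
                  = sigma(f_(1)) sigma(g_(1)) r(g_(2), f_(2)) r(f_(3), g_(3)),
   applied with f = x a generator, g = the rest of the word *)
Fixpoint sigmaN (n : nat) (w : word) {struct n} : ncpoly :=
  match n, w with
  | n'.+1, x :: w' =>
      flatten [seq ncscale (sq ^+ 3 * rW s.1.2 t.1.2 * rW t.2 s.2)
                           (ncmul (ncmonom 1 t.1.1) (sigmaN n' s.1.1))
              | t <- delta3W [:: x], s <- delta3W w']
  | _, _ => ncmonom 1 [::]
  end.
Definition sigmaW (w : word) : ncpoly := sigmaN (size w) w.

(* mu (sigma (x) id) Psi (u (x) v), with Psi(f (x) g) = g_(1) (x) f_(1) r(f_(2), g_(2)) *)
Definition twW (u v : word) : ncpoly :=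
  flatten [seq ncscale (rW pu.2 pv.2) (ncmul (sigmaW pv.1) (ncmonom 1 pu.1))
          | pu <- deltaW u, pv <- deltaW v].

(* b_1 = mu - mu (sigma (x) id) Psi, on a finite sum  sum_i c_i u_i (x) v_i *)
Definition b1 (s : seq (K * word * word)) : ncpoly :=
  flatten [seq ncadd (ncmonom t.1.1 (t.1.2 ++ t.2)) (ncscale (- t.1.1) (twW t.1.2 t.2))
          | t <- s].

End NC.

(* Main.v *)
Require Import Defs.
From mathcomp Require Import all_boot all_algebra.
From mathcomp Require Import complex reals.
From mathcomp Require Import ring zify.
Set Implicit Arguments.
Unset Strict Implicit.
Unset Printing Implicit Defensive.
Import GRing.Theory.
Local Open Scope ring_scope.

Lemma enumI2 : enum 'I_2 = [:: i0; i1].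
Proof. apply: (inj_map val_inj). by rewrite val_enum_ord. Qed.

Lemma I2_cases (i : 'I_2) : i = i0 \/ i = i1.
Proof.
case: i => [[|[|m]] Hm]; [left|right|by []]; exact: val_inj.
Qed.

Section Main.
Variable K : fieldType.
Variable sq : K.
Hypothesis sq0 : sq != 0.

Lemma coefE (p : ncpoly K) w : nccoef p w = \sum_(x <- p) x.1 * (x.2 == w)%:R.
Proof.
rewrite /nccoef big_mkcond /=; apply: eq_bigr => x _.
by case: eqP => _; rewrite ?mulr1 ?mulr0.
Qed.

Lemma coef_cat (p r : ncpoly K) w : nccoef (p ++ r) w = nccoef p w + nccoef r w.
Proof. by rewrite /nccoef big_cat. Qed.

Lemma coef_nil w : nccoef ([::] : ncpoly K) w = 0.
Proof. by rewrite /nccoef big_nil. Qed.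

Lemma coef_cons (c : K) u (p : ncpoly K) w :
  nccoef ((c, u) :: p) w = c * (u == w)%:R + nccoef p w.
Proof. by rewrite !coefE big_cons. Qed.

Lemma coef_monom (c : K) u w : nccoef (ncmonom c u) w = c * (u == w)%:R.
Proof. by rewrite coef_cons coef_nil addr0. Qed.

Lemma coef_scale (c : K) (p : ncpoly K) w : nccoef (ncscale c p) w = c * nccoef p w.
Proof. by rewrite !coefE big_map big_distrr; apply: eq_bigr => x _ /=; rewrite mulrA. Qed.

Lemma coef_flatten (L : seq (ncpoly K)) w :
  nccoef (flatten L) w = \sum_(p <- L) nccoef p w.
Proof.
elim: L => [|p L IH]; first by rewrite big_nil coef_nil.
by rewrite /= coef_cat IH big_cons.
Qed.

Lemma coef_mul (p r : ncpoly K) w :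
  nccoef (ncmul p r) w = \sum_(x <- p) \sum_(y <- r) x.1 * y.1 * (x.2 ++ y.2 == w)%:R.
Proof.
rewrite /ncmul coef_flatten big_map; apply: eq_bigr => x _.
by rewrite coefE big_map.
Qed.

Definition genI (t : K * word * 'I_7 * word) : ncpoly K :=
  ncmul (ncmul (ncmonom t.1.1.1 t.1.1.2) (Defs.rel sq t.1.2)) (ncmonom 1 t.2).

Definition ceq (p r : ncpoly K) := forall w, nccoef p w = nccoef r w.

Lemma inI_ext p r : ceq p r -> inI sq p -> inI sq r.
Proof. move=> E [s Hs]; exists s => w; by rewrite -E. Qed.

Lemma inI_add p r : inI sq p -> inI sq r -> inI sq (ncadd p r).
Proof.
move=> [s1 H1] [s2 H2]; exists (s1 ++ s2) => w.
by rewrite /ncadd coef_cat H1 H2 map_cat flatten_cat coef_cat.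
Qed.

Lemma ncmul_monoml (a : K) u (r : ncpoly K) :
  ncmul (ncmonom a u) r = [seq (a * y.1, u ++ y.2) | y <- r].
Proof. by rewrite /ncmul /= cats0. Qed.

Lemma genI_scale (c : K) t w :
  nccoef (genI (c * t.1.1.1, t.1.1.2, t.1.2, t.2)) w = c * nccoef (genI t) w.
Proof.
case: t => [[[a u] i] v]; rewrite /genI /= !coef_mul !ncmul_monoml !big_map big_distrr.
apply: eq_bigr => y _; rewrite !big_cons !big_nil /=; ring.
Qed.

Lemma inI_scale (c : K) p : inI sq p -> inI sq (ncscale c p).
Proof.
move=> [s Hs]; exists [seq (c * t.1.1.1, t.1.1.2, t.1.2, t.2) | t <- s] => w.
rewrite coef_scale Hs !coef_flatten !big_map big_distrr; apply: eq_bigr => t _.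
by have := genI_scale c t w; rewrite /genI => ->.
Qed.

Lemma inI_nil : inI sq [::].
Proof. by exists [::] => w. Qed.

Lemma inI_gen t : inI sq (genI t).
Proof. exists [:: t] => w /=. by rewrite cats0. Qed.

Definition inS (p : ncpoly K) := exists s, inI sq (ncadd p (ncopp (b1 sq s))).

Lemma coef_opp (p : ncpoly K) w : nccoef (ncopp p) w = - nccoef p w.
Proof. by rewrite /ncopp coef_scale mulN1r. Qed.

Lemma coef_b1 s w : nccoef (b1 sq s) w =
  \sum_(t <- s) t.1.1 * ((t.1.2 ++ t.2 == w)%:R - nccoef (twW sq t.1.2 t.2) w).
Proof.
rewrite /b1 coef_flatten big_map; apply: eq_bigr => t _.
rewrite /ncadd coef_cat coef_monom coef_scale; ring.
Qed.

Lemma inS_ext p r : ceq p r -> inS p -> inS r.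
Proof.
move=> E [s Hs]; exists s; apply: inI_ext Hs => w.
by rewrite /ncadd !coef_cat E.
Qed.

Lemma inS_add p r : inS p -> inS r -> inS (ncadd p r).
Proof.
move=> [s1 H1] [s2 H2]; exists (s1 ++ s2).
apply: inI_ext (inI_add H1 H2) => w.
rewrite /ncadd !coef_cat !coef_opp !coef_b1 big_cat /=; ring.
Qed.

Lemma inS_scale (c : K) p : inS p -> inS (ncscale c p).
Proof.
move=> [s H]; exists [seq (c * t.1.1, t.1.2, t.2) | t <- s].
apply: inI_ext (inI_scale c H) => w.
rewrite /ncadd !coef_scale !coef_cat !coef_opp !coef_b1 big_map coef_scale.
rewrite mulrDr mulrN; congr (_ - _); rewrite big_distrr; apply: eq_bigr => t _ /=; ring.
Qed.

Lemma inS_I p : inI sq p -> inS p.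
Proof.
move=> H; exists [::]; apply: inI_ext H => w.
by rewrite /ncadd coef_cat coef_opp coef_b1 big_nil oppr0 addr0.
Qed.

Lemma inS_b1 s : inS (b1 sq s).
Proof.
exists s; apply: inI_ext inI_nil => w.
by rewrite /ncadd coef_cat coef_opp coef_nil subrr.
Qed.

Lemma inS_lin p r t (c : K) : inS p -> inS r ->
  (forall w, nccoef t w = nccoef p w + c * nccoef r w) -> inS t.
Proof.
move=> Hp Hr E; apply: inS_ext (inS_add Hp (inS_scale c Hr)) => w.
by rewrite E /ncadd coef_cat coef_scale.
Qed.

Lemma inS_all (f : ncpoly K) : (forall w, inS (ncmonom 1 w)) -> inS f.
Proof.
move=> H; elim: f => [|[c w] f IH].
  by apply: inS_I; apply: inI_nil.
apply: inS_ext (inS_add (inS_scale c (H w)) IH) => v.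
by rewrite /ncadd coef_cat coef_scale !coef_monom coef_cons mul1r.
Qed.

End Main.

Lemma perm_enumI22 : perm_eq (enum {: 'I_2 * 'I_2}) [:: (i0,i0); (i0,i1); (i1,i0); (i1,i1)].
Proof.
apply: uniq_perm; first exact: enum_uniq; first by [].
move=> [a b]; rewrite mem_enum.
by case: (I2_cases a) => ->; case: (I2_cases b) => ->.
Qed.
Lemma sumI22 (R : nmodType) (F : 'I_2 * 'I_2 -> R) :
  \sum_(i <- enum {: 'I_2 * 'I_2}) F i = F (i0,i0) + F (i0,i1) + F (i1,i0) + F (i1,i1).
Proof. by rewrite (perm_big _ perm_enumI22) !big_cons big_nil /= addr0 !addrA. Qed.
Lemma sumI2 (R : nmodType) (F : 'I_2 -> R) :
  \sum_(i <- enum 'I_2) F i = F i0 + F i1.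
Proof. by rewrite enumI2 !big_cons big_nil /= addr0. Qed.

Section S.
Variable K : fieldType.
Variable sq : K.

Lemma rW_nil_r (u : word) : rW sq u [::] = epsW K u.
Proof.
elim: u => [|x u IH] //=. rewrite big_cons big_nil addr0 /= IH /epsW big_cons; ring.
Qed.

Lemma sigma1 x v w :
  nccoef (ncmul (sigmaW sq [:: x]) (ncmonom 1 v)) w = sq^+3 * ((x :: v) == w)%:R.
Proof.
rewrite coef_mul /sigmaW /= !big_flatten /= !big_map /= big_flatten big_map /=.
rewrite (eq_bigr (fun j : 'I_2 * 'I_2 => sq^+3 * (j.1 == j.2)%:R * (j.2 == x.2)%:R * (((x.1,j.1) :: v) == w)%:R)); last first.
  move=> [i j] _; rewrite !big_cons !big_nil /= !big_cons !big_nil /= /epsW !big_cons !big_nil /=; ring.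
rewrite sumI22 /=; case: x => x1 x2; case: (I2_cases x2) => -> /=; rewrite ?eqxx /=; ring.
Qed.
End S.

Section S.
Variable K : fieldType.
Variable sq : K.

Definition T (u : word) (k j : 'I_2) (z w : word) : K :=
  \sum_(pu <- deltaW u) rW sq pu.2 [:: (k,j)] * ((z ++ pu.1) == w)%:R.

Lemma twW1 u g w :
  nccoef (twW sq u [:: g]) w = sq^+3 * \sum_(k <- enum 'I_2) T u k g.2 [:: (g.1,k)] w.
Proof.
rewrite /twW coef_flatten big_allpairs_dep /T big_distrr exchange_big /=.
rewrite big_flatten big_map; apply: eq_bigr => k _.
rewrite big_cons big_nil /= addr0 big_distrr; apply: eq_bigr => pu _.
rewrite coef_scale sigma1 /=; ring.
Qed.

Lemma r1_single y z : r1 sq y [:: z] = r0 sq y z.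
Proof.
rewrite /= (bigD1 y.1) //= eqxx big1 ?addr0; first by case: y => ? ? /=; ring.
by move=> k /negbTE; rewrite eq_sym => ->; rewrite mul0r.
Qed.

Lemma rW_single y u k j :
  rW sq (y :: u) [:: (k,j)] = \sum_(k2 <- enum 'I_2) r0 sq y (k,k2) * rW sq u [:: (k2,j)].
Proof.
rewrite /= big_flatten big_map; apply: eq_bigr => k2 _.
by rewrite big_seq1 r1_single.
Qed.

Lemma rW_nil_single k j : rW sq [::] [:: (k,j)] = (k == j)%:R.
Proof. by rewrite /= /epsW big_cons big_nil mulr1. Qed.

Lemma T_nil k j z w : T [::] k j z w = (k == j)%:R * (z == w)%:R.
Proof. by rewrite /T big_seq1 rW_nil_single cats0. Qed.

Lemma T_cons x u k j z w :
  T (x :: u) k j z w = \sum_(k1 <- enum 'I_2) \sum_(k2 <- enum 'I_2)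
     r0 sq (k1, x.2) (k, k2) * T u k2 j (rcons z (x.1, k1)) w.
Proof.
rewrite /T /= big_allpairs_dep; apply: eq_bigr => k1 _.
rewrite (eq_bigr (fun p => \sum_(k2 <- enum 'I_2) r0 sq (k1,x.2) (k,k2) * (rW sq p.2 [:: (k2,j)] * (rcons z (x.1,k1) ++ p.1 == w)%:R))); last first.
  move=> p _; rewrite -[((_, _) :: _, _).2]/((k1,x.2)::p.2) -[((_, _) :: _, _).1]/((x.1,k1)::p.1).
  by rewrite rW_single big_distrl /= cat_rcons; apply: eq_bigr => k2 _; rewrite mulrA.
rewrite exchange_big /=; apply: eq_bigr => k2 _; by rewrite big_distrr.
Qed.

Definition d0 (u : word) : K := \prod_(y <- u) (if y.2 == i0 then sq else sq^-1).
Definition d1 (u : word) : K := \prod_(y <- u) (if y.2 == i1 then sq else sq^-1).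

Lemma T1 u j z w : T u i1 j z w = (i1 == j)%:R * d1 u * ((z ++ u) == w)%:R.
Proof.
elim: u z => [|x u IH] z; first by rewrite T_nil /d1 big_nil cats0; ring.
rewrite T_cons !sumI2 !IH /d1 big_cons.
case: x => x1 x2; case: (I2_cases x2) => -> /=; rewrite !cat_rcons /=; rewrite /r0 /ga /gb /gc /gd /=; ring.
Qed.

Lemma T00 u z w : T u i0 i0 z w = d0 u * ((z ++ u) == w)%:R.
Proof.
elim: u z => [|x u IH] z; first by rewrite T_nil /d0 big_nil cats0 eqxx mul1r.
rewrite T_cons !sumI2 !IH !T1 /d0 big_cons.
case: x => x1 x2; case: (I2_cases x2) => -> /=; rewrite !cat_rcons /r0 /ga /gb /gc /gd /=; ring.
Qed.

Lemma T01 u z w : all (fun y : gen => y.2 == i1) u -> T u i0 i1 z w = 0.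
Proof.
elim: u z => [|x u IH] z; first by move=> _; rewrite T_nil /= mul0r.
move=> /andP [Hx Hu].
rewrite T_cons !sumI2 !IH // !T1.
case: x Hx => x1 x2 /= /eqP ->; rewrite /r0 /ga /gb /gc /gd /=; ring.
Qed.

End S.

Section S.
Variable K : fieldType.
Variable sq : K.
Hypothesis sq0 : sq != 0.

Lemma b1_gen u g w : nccoef (b1 sq [:: (1, u, [:: g])]) w =
  ((u ++ [:: g]) == w)%:R - sq^+3 * (T sq u i0 g.2 [:: (g.1,i0)] w + T sq u i1 g.2 [:: (g.1,i1)] w).
Proof. by rewrite coef_b1 big_seq1 /= twW1 sumI2 mul1r. Qed.

Lemma b1_col0 u g w : g.2 = i0 -> nccoef (b1 sq [:: (1, u, [:: g])]) w =
  ((u ++ [:: g]) == w)%:R - sq^+3 * d0 sq u * ((g :: u) == w)%:R.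
Proof.
move=> Hg; rewrite b1_gen Hg T00 T1 /=.
case: g Hg => g1 g2 /= ->; ring.
Qed.

Lemma b1_col1 u g w : g.2 = i1 -> all (fun y : gen => y.2 == i1) u ->
  nccoef (b1 sq [:: (1, u, [:: g])]) w =
  ((u ++ [:: g]) == w)%:R - sq^+3 * d1 sq u * ((g :: u) == w)%:R.
Proof.
move=> Hg Hu; rewrite b1_gen Hg T01 // T1 eqxx /=.
case: g Hg => g1 g2 /= ->; ring.
Qed.

End S.

Definition o7 (n : nat) (H : (n < 7)%N) : 'I_7 := Ordinal H.

Section S.
Variable K : fieldType.
Variable sq : K.
Hypothesis sq0 : sq != 0.

Let q := qq sq.

Definition Q (x y : gen) : K :=
  match (val x.1, val x.2, val y.1, val y.2) with
  | (0,0,0,1) => q | (0,1,0,0) => q^-1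
  | (0,0,1,0) => q | (1,0,0,0) => q^-1
  | (0,1,1,1) => q | (1,1,0,1) => q^-1
  | (1,0,1,1) => q | (1,1,1,0) => q^-1
  | (0,0,1,1) => q^+2 | (1,1,0,0) => q^-1^+2
  | _ => 1 end.

Definition cst (x y : gen) : K :=
  match (val x.1, val x.2, val y.1, val y.2) with
  | (0,0,1,1) => 1 - q^+2 | (1,1,0,0) => 1 - q^-1^+2
  | _ => 0 end.

Definition wit (x y : gen) : seq (K * 'I_7) :=
  match (val x.1, val x.2, val y.1, val y.2) with
  | (0,0,0,1) => [:: (1, @o7 0 isT)] | (0,1,0,0) => [:: (- q^-1, @o7 0 isT)]
  | (0,0,1,0) => [:: (1, @o7 1 isT)] | (1,0,0,0) => [:: (- q^-1, @o7 1 isT)]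
  | (0,1,1,1) => [:: (1, @o7 2 isT)] | (1,1,0,1) => [:: (- q^-1, @o7 2 isT)]
  | (1,0,1,1) => [:: (1, @o7 3 isT)] | (1,1,1,0) => [:: (- q^-1, @o7 3 isT)]
  | (0,1,1,0) => [:: (1, @o7 4 isT)] | (1,0,0,1) => [:: (-1, @o7 4 isT)]
  | (0,0,1,1) => [:: (1, @o7 5 isT); (- q^+2, @o7 6 isT)]
  | (1,1,0,0) => [:: (- q^-1^+2, @o7 5 isT); (1, @o7 6 isT)]
  | _ => [::] end.

Lemma coef_genI c u i v w : nccoef (genI sq (c, u, i, v)) w =
  \sum_(r <- Defs.rel sq i) c * r.1 * ((u ++ r.2 ++ v) == w)%:R.
Proof.
rewrite /genI /= coef_mul ncmul_monoml big_map; apply: eq_bigr => r _.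
by rewrite big_seq1 /= mulr1 catA.
Qed.

Lemma q0 : q != 0. Proof. by rewrite /q /qq expf_neq0. Qed.

Lemma swap_coef u v x y w :
  nccoef (ncmonom 1 (u ++ x :: y :: v)) w - Q x y * nccoef (ncmonom 1 (u ++ y :: x :: v)) w
  - cst x y * nccoef (ncmonom 1 (u ++ v)) w
  = \sum_(t <- wit x y) nccoef (genI sq (t.1, u, t.2, v)) w.
Proof.
have hq := q0.
rewrite !coef_monom.
case: x => x1 x2; case: y => y1 y2.
case: (I2_cases x1) => ->; case: (I2_cases x2) => ->;
case: (I2_cases y1) => ->; case: (I2_cases y2) => ->;
rewrite /Q /cst /wit /= ?big_nil ?big_cons ?big_nil /= ?coef_genI /= ?big_cons ?big_nil /=
  /ga /gb /gc /gd -/q; try field.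
all: by [].
Qed.
End S.

Section S.
Variable K : fieldType.
Variable sq : K.
Hypothesis sq0 : sq != 0.

Notation W w := (ncmonom (1 : K) w).
Notation S := (inS sq).

Lemma inS_lin2 p r t (a b : K) : S p -> S r ->
  (forall w, nccoef t w = a * nccoef p w + b * nccoef r w) -> S t.
Proof.
move=> Hp Hr E; apply: inS_ext (inS_add (inS_scale a Hp) (inS_scale b Hr)) => w.
by rewrite E /ncadd coef_cat !coef_scale.
Qed.

Lemma inS_zero t : (forall w, nccoef t w = 0) -> S t.
Proof. move=> E; apply: inS_I; apply: inI_ext (inI_nil sq) => w; by rewrite E coef_nil. Qed.

Definition mu (x : gen) (p : word) : K := \prod_(y <- p) Q sq x y.

Variable n : nat.
Hypothesis IH : forall v : word, (size v < n)%N -> S (W v).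

Lemma swapS u v x y : size (u ++ x :: y :: v) = n ->
  S (ncadd (W (u ++ x :: y :: v)) (ncmonom (- Q sq x y) (u ++ y :: x :: v))).
Proof.
move=> Hs.
have HI : inI sq (ncadd (W (u ++ x :: y :: v))
   (ncadd (ncmonom (- Q sq x y) (u ++ y :: x :: v)) (ncmonom (- cst sq x y) (u ++ v)))).
  exists [seq (t.1, u, t.2, v) | t <- wit sq x y] => w.
  rewrite /ncadd !coef_cat !coef_monom coef_flatten big_map.
  have := @swap_coef K sq sq0 u v x y w; rewrite !coef_monom big_map /genI /= => <-; ring.
have Hl : (size (u ++ v) < n)%N by rewrite -Hs !size_cat /= !addnS ltnS leqnSn.
apply: (inS_lin2 (a:=1) (b:=cst sq x y) (inS_I HI) (IH Hl)) => w.
rewrite /ncadd !coef_cat !coef_monom; ring.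
Qed.

Lemma moveS p : forall u v x, size (u ++ x :: p ++ v) = n ->
  S (ncadd (W (u ++ x :: p ++ v)) (ncmonom (- mu x p) (u ++ p ++ x :: v))).
Proof.
elim: p => [|y p IHp] u v x Hs.
  by apply: inS_zero => w; rewrite /ncadd coef_cat !coef_monom /mu big_nil /=; ring.
have H1 := swapS (u:=u) (v:=p ++ v) (x:=x) (y:=y) Hs.
have H2 : S (ncadd (W (rcons u y ++ x :: p ++ v)) (ncmonom (- mu x p) (rcons u y ++ p ++ x :: v))).
  by apply: IHp; rewrite cat_rcons -Hs !size_cat /= !addnS.
rewrite !cat_rcons in H2.
apply: (inS_lin2 (a:=1) (b:=Q sq x y) H1 H2) => w.
rewrite /ncadd !coef_cat !coef_monom /mu big_cons /=; ring.
Qed.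

Lemma finishS x u (al : K) : S (ncadd (W (u ++ [:: x])) (ncmonom (- al) (x :: u))) ->
  size (u ++ [:: x]) = n -> al * mu x u != 1 -> S (W (u ++ [:: x])).
Proof.
move=> H1 Hs Hne.
have Hs' : size ([::] ++ x :: u ++ [::]) = n by rewrite /= cats0 -Hs size_cat /= addn1.
have H2 := moveS Hs'; rewrite cats0 !cat0s in H2.
have Hu : 1 - al * mu x u != 0 by rewrite subr_eq0 eq_sym.
apply: (inS_lin2 (a:=(1 - al * mu x u)^-1) (b:=(1 - al * mu x u)^-1 * al) H1 H2) => w.
rewrite /ncadd !coef_cat !coef_monom. field; exact: Hu.
Qed.

End S.

Lemma gen_cases (y : gen) : [\/ y = ga, y = gb, y = gc | y = gd].
Proof.
case: y => y1 y2; case: (I2_cases y1) => ->; case: (I2_cases y2) => ->.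
- exact: Or41. - exact: Or42. - exact: Or43. - exact: Or44.
Qed.

Section S.
Variable K : fieldType.
Variable sq : K.
Hypothesis sq0 : sq != 0.
Hypothesis hq : forall m, (0 < m)%N -> (sq ^+ 2) ^+ m != 1.

Notation W w := (ncmonom (1 : K) w).
Notation S := (inS sq).

Lemma pow_ne1 N : (0 < N)%N -> sq ^+ N != 1.
Proof.
move=> HN; apply: contra (hq HN) => /eqP H.
by rewrite -exprM mulnC exprM H expr1n.
Qed.

Lemma q_ne1 : 1 - qq sq != 0.
Proof. by rewrite subr_eq0 eq_sym /qq -(expr1 (sq^+2)) hq. Qed.

Lemma expo (f : gen -> K) x u :
  (forall y, y \in u -> exists N, f y * Q sq x y = sq ^+ N) ->
  exists N, (\prod_(y <- u) f y) * mu sq x u = sq ^+ N.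
Proof.
elim: u => [|y u IHu] H; first by exists 0%N; rewrite /mu !big_nil mulr1.
have [N1 H1] := H y (mem_head _ _).
have [N2 H2] : exists N, \prod_(y <- u) f y * mu sq x u = sq ^+ N.
  by apply: IHu => z hz; apply: H; rewrite in_cons hz orbT.
exists (N1 + N2)%N; rewrite /mu !big_cons exprD -H1 -H2 /mu; ring.
Qed.

Lemma base : S (W [::]).
Proof.
have hq0 : qq sq != 0 by rewrite /qq expf_neq0.
have h1 := q_ne1.
have E1 := inS_b1 sq [:: (1, [:: gd], [:: ga])].
have E2 := inS_b1 sq [:: (1, [:: gb], [:: gc])].
have R6 := inS_I (inI_gen sq (1, [::], @o7 6 isT, [::])).
have R5 := inS_I (inI_gen sq (1, [::], @o7 5 isT, [::])).
have R4 := inS_I (inI_gen sq (1, [::], @o7 4 isT, [::])).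
set q := qq sq.
set be := (q^-1 - q^+2) / (1 - q).
have F1 := inS_lin2 (a:=1) (b:=-be) E1 E2 (t := ncadd (ncadd (W [:: gd; ga]) (ncmonom (- q) [:: ga; gd]))
    (ncadd (ncmonom (- be) [:: gb; gc]) (ncmonom (be * q) [:: gc; gb]))).
have {}F1 : S (ncadd (ncadd (W [:: gd; ga]) (ncmonom (- q) [:: ga; gd]))
    (ncadd (ncmonom (- be) [:: gb; gc]) (ncmonom (be * q) [:: gc; gb]))).
  apply: F1 => w; rewrite !b1_col0 // /d0 !big_seq1 /= ?coef_cons ?coef_monom ?coef_nil /be /q; move: h1; rewrite /qq => h1; field; by rewrite ?h1 ?sq0.
have G := inS_add (inS_add (inS_add F1 (inS_scale (-1) R6)) (inS_scale q R5)) (inS_scale (be * q) R4).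
apply: inS_ext (inS_scale ((1 - q)^-1) G) => w.
rewrite /ncadd !coef_scale !coef_cat !coef_scale !coef_cat ?coef_genI /= ?big_cons ?big_nil /=.
rewrite ?coef_cons ?coef_monom ?coef_nil /be /q.
move: h1; rewrite /qq => h1; rewrite /ga /gb /gc /gd; field; by rewrite ?h1 ?sq0.
Qed.

End S.

Section S.
Variable K : fieldType.
Variable sq : K.
Hypothesis sq0 : sq != 0.
Hypothesis hq : forall m, (0 < m)%N -> (sq ^+ 2) ^+ m != 1.

Notation W w := (ncmonom (1 : K) w).
Notation S := (inS sq).

Variable n : nat.
Hypothesis IH : forall v : word, (size v < n)%N -> S (W v).

Lemma endS x w : size w = n -> x \in w ->
  (forall u, (forall y, y \in u -> y \in w) -> (forall y, y \in w -> y != x -> y \in u) ->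
     size (u ++ [:: x]) = n -> S (W (u ++ [:: x]))) ->
  S (W w).
Proof.
move=> Hs Hx H; move: Hs H; case/splitPr: Hx => p r Hs H.
have {}H := H (p ++ r).
have Hs' : size (p ++ x :: r ++ [::]) = n by rewrite cats0.
have M := moveS sq0 IH Hs'; rewrite cats0 catA in M.
have Hu : S (W ((p ++ r) ++ [:: x])).
  apply: H; last by rewrite -Hs !size_cat /=; lia.
  - by move=> y; rewrite !mem_cat in_cons => /orP [->|->]; rewrite ?orbT.
  - by move=> y; rewrite !mem_cat in_cons => /orP [->//|/orP [/eqP ->|->]]; rewrite ?eqxx ?orbT.
apply: (inS_lin2 (a:=1) (b:=mu sq x (r)) M Hu) => v.
rewrite /ncadd coef_cat !coef_monom; ring.
Qed.

Lemma finX x u (f : gen -> K) :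
  S (ncadd (W (u ++ [:: x])) (ncmonom (- (sq ^+ 3 * \prod_(y <- u) f y)) (x :: u))) ->
  size (u ++ [:: x]) = n ->
  (forall y, y \in u -> exists N, f y * Q sq x y = sq ^+ N) ->
  S (W (u ++ [:: x])).
Proof.
move=> H Hs Hy; apply: (finishS sq0 IH H Hs).
have [N HN] := expo Hy.
by rewrite -mulrA HN -exprD pow_ne1.
Qed.

Lemma B0S u g : g.2 = i0 ->
  S (ncadd (W (u ++ [:: g])) (ncmonom (- (sq ^+ 3 * \prod_(y <- u) (if y.2 == i0 then sq else sq^-1))) (g :: u))).
Proof.
move=> Hg; apply: inS_ext (inS_b1 sq [:: (1, u, [:: g])]) => w.
by rewrite b1_col0 // /ncadd coef_cat !coef_monom /d0; ring.
Qed.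

Lemma B1S u g : g.2 = i1 -> all (fun y : gen => y.2 == i1) u ->
  S (ncadd (W (u ++ [:: g])) (ncmonom (- (sq ^+ 3 * \prod_(y <- u) (if y.2 == i1 then sq else sq^-1))) (g :: u))).
Proof.
move=> Hg Hu; apply: inS_ext (inS_b1 sq [:: (1, u, [:: g])]) => w.
by rewrite b1_col1 // /ncadd coef_cat !coef_monom /d1; ring.
Qed.

Lemma letA y : exists N, (if y.2 == i0 then sq else sq^-1) * Q sq ga y = sq ^+ N.
Proof.
case: (gen_cases y) => ->; rewrite /Q /qq /=.
- by exists 1%N; ring.
- by exists 1%N; field.
- by exists 3%N; field.
- by exists 3%N; field.
Qed.

Lemma letB y : y.2 = i1 -> exists N, (if y.2 == i1 then sq else sq^-1) * Q sq gb y = sq ^+ N.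
Proof.
case: (gen_cases y) => -> //= _; rewrite /Q /qq /=.
- by exists 1%N; ring.
- by exists 3%N; field.
Qed.

Lemma letC y : y.1 = i1 -> exists N, (if y.2 == i0 then sq else sq^-1) * Q sq gc y = sq ^+ N.
Proof.
case: (gen_cases y) => -> //= _; rewrite /Q /qq /=.
- by exists 1%N; ring.
- by exists 1%N; field.
Qed.

Lemma letD : exists N, (if gd.2 == i1 then sq else sq^-1) * Q sq gd gd = sq ^+ N.
Proof. by exists 1%N; rewrite /Q /=; ring. Qed.

Lemma caseA w : size w = n -> ga \in w -> S (W w).
Proof.
move=> Hs Ha; apply: (endS Hs Ha) => u _ _ Hu.
have H0 : ga.2 = i0 by []. have H1 := B0S u H0. apply: (@finX ga u (fun y : gen => if y.2 == i0 then sq else sq^-1) H1 Hu) => y _; exact: letA.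
Qed.

Lemma caseBC w : size w = n -> gb \in w -> gc \in w -> S (W w).
Proof.
move=> Hs Hb Hc; apply: (endS Hs Hc) => u _ Hsup Hu.
have Hbu : gb \in u by apply: Hsup.
move: Hu; case/splitPr: Hbu => p r Hu.
have Hs2 : size (p ++ gb :: r ++ [:: gc]) = n by rewrite -Hu -catA.
have M := moveS sq0 IH Hs2.
have HA : S (W ((p ++ r) ++ [:: ga; gd])).
  apply: caseA; first by rewrite -Hu !size_cat /=; lia.
  by rewrite mem_cat in_cons eqxx orbT.
have HZ : S (W (p ++ r)). apply: IH; by rewrite -Hu !size_cat /= addn1 ltnS leq_add2l leqnSn.
have HR := inS_I (inI_gen sq (1, p ++ r, @o7 5 isT, [::])).
set m := mu sq gb r.
set q := qq sq.
have hq0 : q != 0 by rewrite /q /qq expf_neq0.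
have G := inS_add (inS_add (inS_add M (inS_scale (m / q) HA)) (inS_scale (- m / q) HZ)) (inS_scale (- m / q) HR).
apply: inS_ext G => v.
rewrite /ncadd !coef_cat !coef_scale !coef_cat !coef_monom /= ?coef_nil.
rewrite -!catA /= ?cats0 -/q. rewrite /m; field; exact: hq0.
Qed.

Lemma caseB w : size w = n -> gb \in w -> ga \notin w -> gc \notin w -> S (W w).
Proof.
move=> Hs Hb Na Nc; apply: (endS Hs Hb) => u Hsub _ Hu.
have Hl : forall y, y \in u -> y.2 = i1.
  move=> y Hy; have := Hsub y Hy; case: (gen_cases y) => -> // Hm.
  - by rewrite Hm in Na.
  - by rewrite Hm in Nc.
have Hall : all (fun y : gen => y.2 == i1) u by apply/allP => y /Hl ->.
have H0 : gb.2 = i1 by [].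
have H1 := B1S H0 Hall.
apply: (@finX gb u (fun y : gen => if y.2 == i1 then sq else sq^-1) H1 Hu) => y Hy.
exact: letB (Hl y Hy).
Qed.

Lemma caseC w : size w = n -> gc \in w -> ga \notin w -> gb \notin w -> S (W w).
Proof.
move=> Hs Hc Na Nb; apply: (endS Hs Hc) => u Hsub _ Hu.
have Hl : forall y, y \in u -> y.1 = i1.
  move=> y Hy; have := Hsub y Hy; case: (gen_cases y) => -> // Hm.
  - by rewrite Hm in Na.
  - by rewrite Hm in Nb.
have H0 : gc.2 = i0 by [].
have H1 := B0S u H0.
apply: (@finX gc u (fun y : gen => if y.2 == i0 then sq else sq^-1) H1 Hu) => y Hy.
exact: letC (Hl y Hy).
Qed.

Lemma caseD w : size w = n -> (0 < n)%N -> ga \notin w -> gb \notin w -> gc \notin w -> S (W w).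
Proof.
move=> Hs Hn Na Nb Nc.
have Hd : forall y, y \in w -> y = gd.
  move=> y; case: (gen_cases y) => -> // Hm.
  - by rewrite Hm in Na.
  - by rewrite Hm in Nb.
  - by rewrite Hm in Nc.
move: Hs Hd; case/lastP: w Na Nb Nc => [|u x] Na Nb Nc Hs Hd; first by move: Hn; rewrite -Hs.
have Hx : x = gd by apply: Hd; rewrite mem_rcons mem_head.
have Hu : forall y, y \in u -> y = gd by move=> y Hy; apply: Hd; rewrite mem_rcons in_cons Hy orbT.
have Hall : all (fun y : gen => y.2 == i1) u by apply/allP => y /Hu ->.
have H0 : gd.2 = i1 by [].
have H1 := B1S H0 Hall.
rewrite Hx -cats1; rewrite Hx -cats1 in Hs.
apply: (@finX gd u (fun y : gen => if y.2 == i1 then sq else sq^-1) H1 Hs) => y Hy.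
rewrite (Hu y Hy); exact: letD.
Qed.

Lemma stepS w : size w = n -> S (W w).
Proof.
move=> Hs; case: (boolP (ga \in w)) => Ha; first exact: caseA.
case: (boolP (gb \in w)) => Hb; case: (boolP (gc \in w)) => Hc.
- exact: caseBC.
- exact: caseB.
- exact: caseC.
- case: (posnP n) => Hn; last exact: caseD.
  move: Hs; rewrite Hn; case: w {Ha Hb Hc} => // _.
  exact: base.
Qed.

End S.

Theorem mainTheorem11 (R : realType) (q sq : R[i]) :
  sq ^+ 2 = q -> q != 0 ->
  (forall n : nat, (0 < n)%N -> q ^+ n != 1) ->
  forall f : ncpoly R[i], exists s : seq (R[i] * word * word),
    eqA sq f (b1 sq s).
Proof.
move=> Hq q0 hq f.
have sq0 : sq != 0 by apply: contra q0 => /eqP s0; rewrite -Hq s0 expr0n.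
have hq' : forall m, (0 < m)%N -> (sq ^+ 2) ^+ m != 1 by move=> m; rewrite Hq; exact: hq.
have H : forall n (w : word), size w = n -> inS sq (ncmonom 1 w).
  elim/ltn_ind => n IHn w Hs.
  apply: (stepS sq0 hq' (n := n)) => // v Hv.
  exact: (IHn _ Hv v).
have := @inS_all _ sq f (fun w => H _ w erefl).
by [].
Qed.
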